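(* Let $n\ge2$ be a power of 2 and $f = \mathsf{ADDR}_n$. Then $\mathsf{D}_{\mathrm{cc}}^\rightarrow(f \circ \mathsf{AND}) \geq \mathrm{rank}(M_{f \circ \mathsf{AND}})^{\log_3 2}$.
   Context: $\mathsf{ADDR}_n:\{0,1\}^{\log n+n}\to\{0,1\}$ is $\mathsf{ADDR}_n(x,y)=y_{\mathsf{bin}(x)}$ for $x\in\{0,1\}^{\log n}$, $y\in\{0,1\}^n$, where $\mathsf{bin}(x)\in[n]$ is the integer whose binary representation is $x$. For $f:\{0,1\}^m\to\{0,1\}$, $f\circ\mathsf{AND}$ is the two-party function $(u,v)\mapsto f(u_1\wedge v_1,\dots,u_m\wedge v_m)$ with Alice holding $u\in\{0,1\}^m$, Bob $v\in\{0,1\}^m$; $M_{f\circ\mathsf{AND}}$ is its communication matrix (entry $(u,v)$ equals $(f\circ\mathsf{AND})(u,v)$), $\mathrm{rank}$ is real rank, and $\mathsf{D}_{\mathrm{cc}}^\rightarrow$ is deterministic one-way communication complexity. *)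

(* Defs.v *)
From Stdlib Require Import Reals.
From HB Require Import structures.
From mathcomp Require Import all_boot all_order all_algebra.
From mathcomp Require Import Rstruct.
Set Implicit Arguments. Unset Strict Implicit. Unset Printing Implicit Defensive.
Import GRing.Theory.

(* bin x : the integer whose binary representation is x (most significant bit first). *)
Definition bin (x : seq bool) : nat := foldl (fun acc (b : bool) => acc.*2 + b) 0 x.

(* ADDR_n with n = 2^k: input w in {0,1}^(k + 2^k), w = (x, y), x of length k,
   y of length 2^k indexed from 0; output y_{bin(x)}. *)
Definition ADDR (k : nat) (w : (k + 2 ^ k).-tuple bool) : bool :=
  nth false (drop k w) (bin (take k w)).

Definition compAND (m : nat) (f : m.-tuple bool -> bool)
  (u v : m.-tuple bool) : bool :=
  f [tuple tnth u i && tnth v i | i < m].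

Definition commMx (U V : finType) (F : U -> V -> bool) : 'M[R]_(#|U|, #|V|) :=
  \matrix_(i, j) ((F (enum_val i) (enum_val j))%:R)%R.

Definition oneway_protocol (U V : finType) (F : U -> V -> bool) (c : nat) : bool :=
  [exists A : {ffun U -> c.-tuple bool},
     exists B : {ffun (c.-tuple bool * V) -> bool},
       [forall u, forall v, B (A u, v) == F u v]].

Lemma oneway_protocol_exists (U V : finType) (F : U -> V -> bool) :
  exists c, oneway_protocol F c.
Proof.
set c := #|U|.
pose A : {ffun U -> c.-tuple bool} := [ffun u : U => [tuple (enum_rank u == i) | i < c]].
pose B : {ffun (c.-tuple bool * V) -> bool} := [ffun p : c.-tuple bool * V =>
   if [pick u : U | A u == p.1] is Some u then F u p.2 else false].
exists c; apply/existsP; exists A; apply/existsP; exists B.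
apply/forallP => u; apply/forallP => v; rewrite ffunE /=.
case: pickP => [u' /eqP Hu|/(_ u)]; last by rewrite eqxx.
have -> : u' = u; last by [].
apply: enum_rank_inj; move/(congr1 (fun t : c.-tuple bool => tnth t (enum_rank u))): Hu.
by rewrite !ffunE !tnth_mktuple eqxx => /eqP.
Qed.

Definition Dcc_oneway (U V : finType) (F : U -> V -> bool) : nat :=
  ex_minn (oneway_protocol_exists F).

(* Main.v *)
Require Import Defs.
From Stdlib Require Import Reals Lra.
From HB Require Import structures.
From mathcomp Require Import all_boot all_order all_algebra.
From mathcomp Require Import Rstruct.
Set Implicit Arguments. Unset Strict Implicit. Unset Printing Implicit Defensive.
Import GRing.Theory.

Section S.
Variable k : nat.
Local Notation m := (k + 2 ^ k)%N.

Lemma nthw (u v : m.-tuple bool) j :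
  nth false [tuple tnth u i && tnth v i | i < m] j = nth false u j && nth false v j.
Proof.
case: (ltnP j m) => hj.
  by rewrite -(tnth_nth _ _ (Ordinal hj)) tnth_mktuple !(tnth_nth false).
by rewrite !nth_default ?size_tuple.
Qed.

Lemma F_eq (u v : m.-tuple bool) :
  compAND (@ADDR k) u v =
  let b := bin [seq nth false u i && nth false v i | i <- iota 0 k] in
  nth false u (k + b) && nth false v (k + b).
Proof.
rewrite /compAND /ADDR nth_drop -(map_nth_iota0 false); last by rewrite size_tuple leq_addr.
by rewrite (eq_map (nthw u v)) nthw.
Qed.
Local Open Scope ring_scope.

Definition Yf (u : m.-tuple bool) (a : {ffun 'I_k -> bool}) : R :=
  (nth false u (k + bin [seq a i | i <- enum 'I_k]))%:R.
Definition h1 (j : 'I_3) (p : bool) : R :=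
  if val j == 0%N then 1 else if val j == 1%N then - (p%:R) else p%:R.
Definition h2 (j : 'I_3) (q : bool) : R := if val j == 0%N then 1 else q%:R.
Definition at3 (t : {ffun 'I_k -> 'I_3}) : {ffun 'I_k -> bool} :=
  [ffun i => val (t i) == 2%N].
Definition A0 (u : m.-tuple bool) (t : {ffun 'I_k -> 'I_3}) : R :=
  Yf u (at3 t) * \prod_(i < k) h1 (t i) (nth false u i).
Definition B0 (t : {ffun 'I_k -> 'I_3}) (v : m.-tuple bool) : R :=
  Yf v (at3 t) * \prod_(i < k) h2 (t i) (nth false v i).

Lemma coord (b p q : bool) :
  (((p && q) == b) : nat)%:R
  = \sum_(j < 3) ((b == (val j == 2%N)) : nat)%:R * (h1 j p * h2 j q) :> R.
Proof.
rewrite !big_ord_recr big_ord0 /= /h1 /h2 /=.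
by case: b; case: p; case: q; rewrite /= !(mul0r, mulr0, mul1r, mulr1, add0r, addr0, oppr0, subrr, mulN1r, addrN).
Qed.

Lemma L1 (a b : {ffun 'I_k -> bool}) :
  \prod_(i < k) (((a i == b i) : nat)%:R : R) = ((a == b) : nat)%:R.
Proof.
case: (eqVneq a b) => [->|hab].
  by rewrite big1 // => i _; rewrite eqxx.
have [i hi] : exists i, a i != b i.
  apply/existsP; apply: contraR hab => /existsPn H; apply/eqP/ffunP => i.
  by apply/eqP; move: (H i); rewrite negbK.
by rewrite (bigD1 i) //= (negbTE hi) mul0r.
Qed.

Lemma main_eq (u v : m.-tuple bool) :
  ((compAND (@ADDR k) u v) : nat)%:R
  = \sum_(t : {ffun 'I_k -> 'I_3}) A0 u t * B0 t v :> R.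
Proof.
set xw := [ffun i : 'I_k => nth false u i && nth false v i].
have e1 : [seq xw i | i <- enum 'I_k] = [seq nth false u i && nth false v i | i <- iota 0 k].
  by rewrite -val_enum_ord -map_comp; apply: eq_map => i; rewrite /= ffunE.
have -> : ((compAND (@ADDR k) u v) : nat)%:R = Yf u xw * Yf v xw.
  by rewrite F_eq /= -mulnb natrM /Yf e1.
transitivity (\sum_(a : {ffun 'I_k -> bool}) (Yf u a * Yf v a) * ((xw == a) : nat)%:R).
  rewrite (bigD1 xw) //= eqxx mulr1 big1 ?addr0 // => a.
  by rewrite eq_sym => /negbTE ->; rewrite mulr0.
transitivity (\sum_(a : {ffun 'I_k -> bool}) \sum_(t : {ffun 'I_k -> 'I_3})
    (Yf u a * Yf v a) * (((a == at3 t) : nat)%:R *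
      \prod_(i < k) (h1 (t i) (nth false u i) * h2 (t i) (nth false v i)))).
  apply: eq_bigr => a _; rewrite -mulr_sumr; congr (_ * _).
  rewrite -L1.
  rewrite (eq_bigr (fun i => \sum_(j < 3) ((a i == (val j == 2%N)) : nat)%:R *
        (h1 j (nth false u i) * h2 j (nth false v i)))); last first.
    by move=> i _; rewrite -coord ffunE.
  rewrite bigA_distr_bigA; apply: eq_bigr => t _.
  rewrite big_split /= -L1; congr (_ * _); apply: eq_bigr => i _.
  by rewrite ffunE.
rewrite exchange_big; apply: eq_bigr => t _.
rewrite (bigD1 (at3 t)) //= eqxx mul1r [X in _ + X]big1 ?addr0; last first.
  by move=> a /negbTE ->; rewrite mul0r mulr0.
by rewrite /A0 /B0 big_split /= mulrACA.
Qed.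
End S.
Section RB.
Local Open Scope ring_scope.
Lemma rank_bound k : (\rank (commMx (compAND (@ADDR k))) <= 3 ^ k)%N.
Proof.
pose T := {ffun 'I_k -> 'I_3}.
pose Amx : 'M[R]_(#|{: (k + 2 ^ k).-tuple bool}|, #|T|) :=
  \matrix_(i, j) A0 (enum_val i) (enum_val j).
pose Bmx : 'M[R]_(#|T|, #|{: (k + 2 ^ k).-tuple bool}|) :=
  \matrix_(i, j) B0 (enum_val i) (enum_val j).
have -> : commMx (compAND (@ADDR k)) = Amx *m Bmx.
  apply/matrixP => i j; rewrite !mxE main_eq.
  rewrite (big_enum_val (A := T)) /=.
  by apply: eq_bigr => l _; rewrite !mxE.
apply: leq_trans (mxrankM_maxl _ _) _.
apply: leq_trans (rank_leq_col _) _.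
by rewrite card_ffun !card_ord.
Qed.
End RB.

Lemma bin_rcons s b : bin (rcons s b) = ((bin s).*2 + b)%N.
Proof. by rewrite /bin foldl_rcons. Qed.

Lemma bin_surj k j : (j < 2 ^ k)%N -> exists s : seq bool, size s = k /\ bin s = j.
Proof.
elim: k j => [|k IH] j hj.
  by exists [::]; move: hj; rewrite expn0 ltnS leqn0 => /eqP ->.
have [s [hs hb]] : exists s : seq bool, size s = k /\ bin s = j./2.
  apply: IH; rewrite -ltn_double -[X in (_ < X)%N]mul2n -expnS.
  apply: leq_ltn_trans hj; rewrite -{2}(odd_double_half j); exact: leq_addl.
exists (rcons s (odd j)); rewrite size_rcons hs bin_rcons hb addnC.
by rewrite odd_double_half.
Qed.

Lemma nth_mk n (f : nat -> bool) j : (j < n)%N ->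
  nth false [tuple f i | i < n] j = f j.
Proof.
move=> hj; by rewrite -(tnth_nth _ _ (Ordinal hj)) tnth_mktuple.
Qed.

Lemma Dbound k c : oneway_protocol (compAND (@ADDR k)) c -> (2 ^ k <= c)%N.
Proof.
move=> /existsP [A /existsP [B /forallP H]].
pose m := (k + 2 ^ k)%N.
pose emb (y : (2 ^ k).-tuple bool) : m.-tuple bool :=
  [tuple if (i < k)%N then true else nth false y (i - k) | i < m].
pose vs (s : seq bool) : m.-tuple bool :=
  [tuple if (i < k)%N then nth false s i else true | i < m].
have nemb : forall y i, (i < m)%N ->
    nth false (emb y) i = if (i < k)%N then true else nth false y (i - k).
  by move=> y i hi; exact: (nth_mk (fun i => if (i < k)%N then true else nth false y (i - k))).
have nvs : forall s i, (i < m)%N ->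
    nth false (vs s) i = if (i < k)%N then nth false s i else true.
  by move=> s i hi; exact: (nth_mk (fun i => if (i < k)%N then nth false s i else true)).
have key : forall (j : 'I_(2 ^ k)), exists v, forall y,
    compAND (@ADDR k) (emb y) v = tnth y j.
  move=> j; have [s [hs hb]] := bin_surj (ltn_ord j).
  exists (vs s) => y; rewrite F_eq /=.
  have -> : [seq nth false (emb y) i && nth false (vs s) i | i <- iota 0 k]
            = [seq nth false s i | i <- iota 0 k].
    apply/eq_in_map => i; rewrite mem_iota add0n => /andP [_ hi].
    have him : (i < m)%N by apply: leq_trans hi (leq_addr _ _).
    by rewrite nemb // nvs // hi.
  rewrite (map_nth_iota0 false); last by rewrite hs.
  have -> : take k s = s by rewrite -hs take_size.
  rewrite hb.
  have hm : (k + j < m)%N by rewrite ltn_add2l.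
  by rewrite nemb // nvs // ltnNge leq_addr /= addKn andbT (tnth_nth false).
have inj : injective (fun y => A (emb y)).
  move=> y y' e; apply: eq_from_tnth => j.
  have [v hv] := key j.
  rewrite -!hv.
  have := H (emb y) => /forallP /(_ v) /eqP <-.
  rewrite e.
  by have := H (emb y') => /forallP /(_ v) /eqP ->.
have := leq_card _ inj; rewrite !card_tuple card_bool.
by rewrite leq_exp2l.
Qed.
Section RP.
Local Open Scope R_scope.
Lemma real_part (k r D : nat) : (r <= 3 ^ k)%N -> (2 ^ k <= D)%N ->
  Rpower (INR r) (ln 2 / ln 3) <= INR D.
Proof.
move=> hr hD.
have l2 : 0 < ln 2 by have := ln_lt_2; lra.
have l3 : 0 < ln 3 by rewrite -ln_1; apply: ln_increasing; lra.
have hD' : 2 ^ k <= INR D.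
  rewrite -[2]/(INR 2) -(pow_INR 2); apply: le_INR; apply/leP.
  have e : forall n, Nat.pow 2 n = (2 ^ n)%N by elim=> [|n IH] //=; rewrite IH expnS.
  by rewrite e.
have h2 : 1 <= 2 ^ k by apply: pow_R1_Rle; lra.
case: (posnP r) => [r0|rpos].
  rewrite r0.
  have ln0 : ln (INR 0) = 0.
    by rewrite /ln; case: Rlt_dec => //= h; exfalso; lra.
  rewrite /Rpower ln0 Rmult_0_r exp_0; lra.
apply: Rle_trans hD'.
have y0 : 0 <= ln 2 / ln 3 by apply: Rlt_le; apply: Rdiv_lt_0_compat.
apply: Rle_trans (Rle_Rpower_l (INR r) (3 ^ k) _ y0 _) _.
  split; first by apply: lt_0_INR; apply/ltP.
  rewrite (_ : 3 = INR 3); last by rewrite /=; lra.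
  rewrite -(pow_INR 3); apply: le_INR; apply/leP.
  have e : forall n, Nat.pow 3 n = (3 ^ n)%N by elim=> [|n IH] //=; rewrite IH expnS.
  by rewrite e.
rewrite -Rpower_pow; last lra.
rewrite Rpower_mult -(Rpower_pow k 2); last lra.
rewrite /Rpower; apply: Req_le; congr exp; field; lra.
Qed.
End RP.

Theorem corollaryA5 (k : nat) (hk : (1 <= k)%N) :
  (Rpower (INR (\rank (commMx (compAND (@ADDR k)))))
          (ln 2 / ln 3)
   <= INR (Dcc_oneway (compAND (@ADDR k))))%R.
Proof.
apply/RleP; apply: real_part; first exact: rank_bound.
rewrite /Dcc_oneway; case: ex_minnP => c hc _; exact: Dbound.
Qed.
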